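(* With $T=\mathcal{P}_{\mathsf{ufs}}$, $FX=1+\mathbb{A}\times X+[\mathbb{A}]X$ and $GX=2\times X^{\mathbb{A}}\times[\mathbb{A}]X$, the natural transformation $\varepsilon\colon TF\to GT$ given by $\varepsilon_X(S)=(b,\,a\mapsto S_a,\,S_{\mathord{|}a})$, where $b=1$ iff $*\in S$, $S_a=\{s:(a,s)\in S\}$ and $S_{\mathord{|}a}=\langle a\rangle\{s:\langle a\rangle s\in S\}$ for $a$ fresh for $S$, is an extension natural transformation, i.e. it satisfies $\varepsilon\cdot\mu F\cdot T\lambda=G\mu\cdot\varepsilon T$ and $\varepsilon\cdot\mu F=G\mu\cdot\rho T\cdot T\varepsilon$.
   Context: Fix a countably infinite set $\mathbb{A}$ of names; $\mathsf{Nom}$ is the category of nominal sets and equivariant maps; $1=\{*\}$, $2=\{0,1\}$. $[\mathbb{A}]X=(\mathbb{A}\times X)/\sim$, $(a,x)\sim(b,y)$ iff $(a\,c)\cdot x=(b\,c)\cdot y$ for fresh $c$, classes $\langle a\rangle x$. $T=\mathcal{P}_{\mathsf{ufs}}$ is the monad of uniformly finitely supported subsets (subsets $A$ with $\bigcup_{x\in A}\mathrm{supp}(x)$ finite), with unit $\eta$ singleton and multiplication $\mu$ union. $\lambda\colon FT\to TF$ is the distributive law $\lambda_X( * )=\{*\}$, $\lambda_X(a,S)=\{(a,x):x\in S\}$, $\lambda_X(\langle a\rangle S)=\{\langle a\rangle s:s\in S\}$. $\rho\colon TG\to GT$ is the distributive law of the canonical lifting of $G$: with product projections $p_0,p_1,p_2$,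 $\rho_X(S)=(b,\,a\mapsto\{f(a):f\in p_1[S]\},\,\langle a\rangle\{s:\langle a\rangle s\in p_2[S]\})$ where $b=1$ iff $1\in p_0[S]$ and $a$ is fresh for $p_2[S]$. *)

(* Defs.v *)
From Stdlib Require Import Arith List Lia ClassicalEpsilon.
Import ListNotations.


Record perm := Perm {
  pf : nat -> nat;
  pinv : nat -> nat;
  pf_pinv : forall a, pf (pinv a) = a;
  pinv_pf : forall a, pinv (pf a) = a;
  pf_fin : exists n, forall a, n <= a -> pf a = a }.

Lemma pid_fin : exists n, forall a : nat, n <= a -> a = a.
Proof. exists 0; auto. Qed.
Definition pid : perm :=
  @Perm (fun a => a) (fun a => a) (fun a => eq_refl) (fun a => eq_refl) pid_fin.

Section Comp.
Variables p q : perm.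
Lemma pcomp_1 a : pf p (pf q (pinv q (pinv p a))) = a.
Proof. rewrite pf_pinv, pf_pinv; reflexivity. Qed.
Lemma pcomp_2 a : pinv q (pinv p (pf p (pf q a))) = a.
Proof. rewrite pinv_pf, pinv_pf; reflexivity. Qed.
Lemma pcomp_3 : exists n, forall a, n <= a -> pf p (pf q a) = a.
Proof.
  destruct (pf_fin p) as [n Hn]; destruct (pf_fin q) as [m Hm].
  exists (max n m); intros a Ha; rewrite Hm by lia; apply Hn; lia.
Qed.
Lemma pinverse_fin : exists n, forall a, n <= a -> pinv p a = a.
Proof.
  destruct (pf_fin p) as [n Hn]; exists n; intros a Ha.
  rewrite <- (Hn a Ha) at 1; apply pinv_pf.
Qed.
End Comp.

Definition pcomp (p q : perm) : perm :=
  @Perm (fun a => pf p (pf q a)) (fun a => pinv q (pinv p a))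
        (pcomp_1 p q) (pcomp_2 p q) (pcomp_3 p q).

Definition pinverse (p : perm) : perm :=
  @Perm (pinv p) (pf p) (pinv_pf p) (pf_pinv p) (pinverse_fin p).

Definition swapf (a b c : nat) : nat :=
  if Nat.eqb c a then b else if Nat.eqb c b then a else c.
Lemma swapf_inv a b c : swapf a b (swapf a b c) = c.
Proof.
  unfold swapf.
  destruct (Nat.eqb_spec c a); destruct (Nat.eqb_spec c b); subst;
  repeat (first [destruct (Nat.eqb_spec _ _) | idtac]); simpl in *; subst; try lia;
  repeat match goal with |- context [Nat.eqb ?x ?y] => destruct (Nat.eqb_spec x y) end;
  subst; lia.
Qed.
Lemma swapf_fin a b : exists n, forall c, n <= c -> swapf a b c = c.
Proof.
  exists (S (max a b)); intros c Hc; unfold swapf.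
  destruct (Nat.eqb_spec c a); [lia|]; destruct (Nat.eqb_spec c b); [lia|]; reflexivity.
Qed.
Definition swap (a b : nat) : perm :=
  @Perm (swapf a b) (swapf a b) (swapf_inv a b) (swapf_inv a b) (swapf_fin a b).

Record pset := PSet { pcar :> Type; pact : perm -> pcar -> pcar }.

Definition supports (X : pset) (L : list nat) (x : X) : Prop :=
  forall p : perm, (forall a, In a L -> pf p a = a) -> pact X p x = x.

(** a is in the (least) support of x: a belongs to every finite support *)
Definition supp (X : pset) (x : X) (a : nat) : Prop :=
  forall L, supports X L x -> In a L.

Definition fresh (X : pset) (a : nat) (x : X) : Prop := ~ supp X x a.

Record nominal := Nominal {
  nset :> pset;
  act_id : forall x : nset, pact nset pid x = x;
  act_comp : forall p q (x : nset), pact nset (pcomp p q) x = pact nset p (pact nset q x);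
  act_fin : forall x : nset, exists L, supports nset L x }.

(** * Constructions on perm-sets (raw carriers; the nominal sets of the
      paper are the subsets described by the [in...] predicates below) *)
Definition pUnit : pset := @PSet unit (fun _ x => x).
Definition pBool : pset := @PSet bool (fun _ x => x).
Definition pAtom : pset := @PSet nat (fun p a => pf p a).
Definition pProd (X Y : pset) : pset :=
  @PSet (X * Y)%type (fun p xy => (pact X p (fst xy), pact Y p (snd xy))).
Definition pSum (X Y : pset) : pset :=
  @PSet (X + Y)%type (fun p s => match s with
                                  | inl x => inl (pact X p x)
                                  | inr y => inr (pact Y p y) end).
Definition pExp (X : pset) : pset :=
  @PSet (nat -> X) (fun p f a => pact X p (f (pinv p a))).
Definition pT (X : pset) : pset :=
  @PSet (X -> Prop) (fun p A y => A (pact X (pinverse p) y)).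

Definition ufs (X : pset) (A : X -> Prop) : Prop :=
  exists L : list nat, forall x, A x -> forall a, supp X x a -> In a L.

(** name abstraction: <a>x is the ~-class of (a,x), where
    (a,x) ~ (b,y) iff (a c).x = (b c).y for c fresh (for a, b, x, y) *)
Definition abs (X : pset) (a : nat) (x : X) : nat * X -> Prop :=
  fun bz => exists c, c <> a /\ c <> fst bz /\ fresh X c x /\ fresh X c (snd bz) /\
            pact X (swap a c) x = pact X (swap (fst bz) c) (snd bz).
Definition pAbs (X : pset) : pset :=
  @PSet (nat * X -> Prop)
        (fun p P bz => P (pinv p (fst bz), pact X (pinverse p) (snd bz))).

Definition pF (X : pset) : pset := pSum pUnit (pSum (pProd pAtom X) (pAbs X)).
Definition pG (X : pset) : pset := pProd (pProd pBool (pExp X)) (pAbs X).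

Definition inT (X : pset) (inX : X -> Prop) (A : pT X) : Prop :=
  ufs X A /\ forall x, A x -> inX x.
Definition inAbs (X : pset) (inX : X -> Prop) (P : pAbs X) : Prop :=
  exists a x, inX x /\ P = abs X a x.
Definition inF (X : pset) (inX : X -> Prop) (u : pF X) : Prop :=
  match u with
  | inl _ => True
  | inr (inl ax) => inX (snd ax)
  | inr (inr P) => inAbs X inX P
  end.
Definition allX (X : pset) (x : X) : Prop := True.

Definition pbool (P : Prop) : bool :=
  if excluded_middle_informative P then true else false.

Definition choose_fresh (X : pset) (x : X) : nat :=
  epsilon (inhabits 0) (fun a => fresh X a x).

Definition mu (X : pset) (SS : pT (pT X)) : pT X :=
  fun x => exists A, SS A /\ A x.
Definition Tmap (X Y : pset) (f : X -> Y) (S : pT X) : pT Y :=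
  fun y => exists x, S x /\ y = f x.

Definition absmap (X Y : pset) (f : X -> Y) (P : pAbs X) : pAbs Y :=
  fun z => exists a x, P = abs X a x /\ abs Y a (f x) z.
Definition Gmap (X Y : pset) (f : X -> Y) (g : pG X) : pG Y :=
  ((fst (fst g), fun a => f (snd (fst g) a)), absmap X Y f (snd g)).

Definition lam (X : pset) (u : pF (pT X)) : pT (pF X) :=
  match u with
  | inl _ => fun z => z = inl tt
  | inr (inl aS) => fun z => exists x, snd aS x /\ z = inr (inl (fst aS, x))
  | inr (inr P) => fun z => exists a (S : pT X) s,
                     P = abs (pT X) a S /\ S s /\ z = inr (inr (abs X a s))
  end.

Definition rho (X : pset) (S : pT (pG X)) : pG (pT X) :=
  let p2S : pT (pAbs X) := fun P => exists g, S g /\ P = snd g in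
  let a := choose_fresh (pT (pAbs X)) p2S in
  ((pbool (exists g, S g /\ fst (fst g) = true),
    fun b => fun y => exists g, S g /\ y = snd (fst g) b),
   abs (pT X) a (fun s => p2S (abs X a s))).

Definition eps (X : pset) (S : pT (pF X)) : pG (pT X) :=
  let a := choose_fresh (pT (pF X)) S in
  ((pbool (S (inl tt)), fun b => fun s => S (inr (inl (b, s)))),
   abs (pT X) a (fun s => S (inr (inr (abs X a s))))).

(* Main.v *)
Require Import Defs.
From Stdlib Require Import Arith List Lia ClassicalEpsilon Classical FunctionalExtensionality PropExtensionality ProofIrrelevance.
Import ListNotations.

Lemma perm_ext (p q : perm) : (forall a, pf p a = pf q a) -> p = q.
Proof.
  destruct p as [f g H1 H2 H3], q as [f' g' H1' H2' H3']; simpl; intros E.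
  assert (f = f') by (apply functional_extensionality; exact E). subst f'.
  assert (g = g').
  { apply functional_extensionality; intro a.
    rewrite <- (H1' a) at 1. apply H2. }
  subst g'. f_equal; apply proof_irrelevance.
Qed.

Lemma pf_inj (p : perm) a b : pf p a = pf p b -> a = b.
Proof. intro E. rewrite <- (pinv_pf p a), <- (pinv_pf p b), E. reflexivity. Qed.

Ltac swt :=
  unfold swapf; repeat (match goal with |- context [Nat.eqb ?x ?y] => destruct (Nat.eqb_spec x y)
    | H : context [Nat.eqb ?x ?y] |- _ => destruct (Nat.eqb_spec x y) end);
  repeat match goal with H : pf ?p ?x = pf ?p ?y |- _ => apply pf_inj in H end;
  subst; try reflexivity; try congruence; try lia.

Lemma swap_conj a c c' x : a <> c -> a <> c' -> c <> c' ->
  swapf c c' (swapf a c x) = swapf a c' (swapf c c' x).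
Proof. intros; swt. Qed.

Lemma swap_conj_p (p : perm) a c y : swapf (pf p a) (pf p c) (pf p y) = pf p (swapf a c y).
Proof. swt. Qed.

Lemma pinverse_pid : pinverse pid = pid.
Proof. apply perm_ext; reflexivity. Qed.
Lemma pinverse_pcomp p q : pinverse (pcomp p q) = pcomp (pinverse q) (pinverse p).
Proof. apply perm_ext; reflexivity. Qed.
Lemma pinverse_swap a b : pinverse (swap a b) = swap a b.
Proof. apply perm_ext; reflexivity. Qed.
Lemma pinverse_inv p : pinverse (pinverse p) = p.
Proof. apply perm_ext; reflexivity. Qed.
Lemma pcomp_inv_l p : pcomp (pinverse p) p = pid.
Proof. apply perm_ext; intro; simpl; apply pinv_pf. Qed.
Lemma pcomp_inv_r p : pcomp p (pinverse p) = pid.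
Proof. apply perm_ext; intro; simpl; apply pf_pinv. Qed.
Lemma swap_swap a b : pcomp (swap a b) (swap a b) = pid.
Proof. apply perm_ext; intro; simpl; apply swapf_inv. Qed.
Lemma swap_refl a : swap a a = pid.
Proof. apply perm_ext; intro; simpl; swt. Qed.

Definition lawful (Y : pset) : Prop :=
  (forall x, pact Y pid x = x) /\ (forall p q x, pact Y (pcomp p q) x = pact Y p (pact Y q x)).

Lemma lawful_nom (X : nominal) : lawful X.
Proof. split; [apply act_id | apply act_comp]. Qed.
Lemma lawful_unit : lawful pUnit. Proof. split; reflexivity. Qed.
Lemma lawful_bool : lawful pBool. Proof. split; reflexivity. Qed.
Lemma lawful_atom : lawful pAtom. Proof. split; reflexivity. Qed.
Lemma lawful_prod X Y : lawful X -> lawful Y -> lawful (pProd X Y).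
Proof. intros [a b] [c d]; split; intros; destruct x; simpl; f_equal; auto. Qed.
Lemma lawful_sum X Y : lawful X -> lawful Y -> lawful (pSum X Y).
Proof. intros [a b] [c d]; split; intros; destruct x; simpl; f_equal; auto. Qed.
Lemma lawful_T X : lawful X -> lawful (pT X).
Proof.
  intros [a b]; split; intros; simpl; apply functional_extensionality; intro y.
  - rewrite pinverse_pid, a; reflexivity.
  - rewrite pinverse_pcomp, b; reflexivity.
Qed.
Lemma lawful_Abs X : lawful X -> lawful (pAbs X).
Proof.
  intros [a b]; split; intros; simpl; apply functional_extensionality; intros [c y]; simpl.
  - rewrite pinverse_pid, a; reflexivity.
  - rewrite pinverse_pcomp, b; reflexivity.
Qed.
Lemma lawful_F X : lawful X -> lawful (pF X).
Proof. intros; unfold pF; auto using lawful_sum, lawful_unit, lawful_prod, lawful_atom, lawful_Abs. Qed.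

Implicit Types Y : pset.
Definition fs (Y : pset) (x : Y) := exists K, supports Y K x.

Lemma act_inv_l Y (HY : lawful Y) p (x : Y) : pact Y (pinverse p) (pact Y p x) = x.
Proof. destruct HY as [h1 h2]. rewrite <- h2, pcomp_inv_l, h1. reflexivity. Qed.
Lemma act_inv_r Y (HY : lawful Y) p (x : Y) : pact Y p (pact Y (pinverse p) x) = x.
Proof. destruct HY as [h1 h2]. rewrite <- h2, pcomp_inv_r, h1. reflexivity. Qed.
Lemma act_swap2 Y (HY : lawful Y) a b (x : Y) : pact Y (swap a b) (pact Y (swap a b) x) = x.
Proof. destruct HY as [h1 h2]. rewrite <- h2, swap_swap, h1. reflexivity. Qed.
Lemma act_inj Y (HY : lawful Y) p (x y : Y) : pact Y p x = pact Y p y -> x = y.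
Proof. intro E. rewrite <- (act_inv_l Y HY p x), <- (act_inv_l Y HY p y), E. reflexivity. Qed.

Lemma supports_mono Y K K' (x : Y) : (forall a, In a K -> In a K') -> supports Y K x -> supports Y K' x.
Proof. intros H S p Hp. apply S. intros; apply Hp, H; auto. Qed.

Lemma notin_ex (K : list nat) : exists c, forall a, In a K -> a < c.
Proof.
  induction K as [|k K [c Hc]]. exists 0; simpl; tauto.
  exists (S (max k c)). intros a [<-|H]. lia. specialize (Hc a H); lia.
Qed.
Lemma notin_ex' (K : list nat) : exists c, ~ In c K.
Proof. destruct (notin_ex K) as [c Hc]. exists c. intro H. specialize (Hc c H). lia. Qed.

Lemma fresh_of Y K (x : Y) c : supports Y K x -> ~ In c K -> fresh Y c x.
Proof. intros S N H. apply N, H, S. Qed.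
Lemma fresh_ex Y (x : Y) c : fresh Y c x -> exists K, supports Y K x /\ ~ In c K.
Proof.
  unfold fresh, supp. intro H. apply not_all_ex_not in H. destruct H as [K HK].
  exists K. split; [apply NNPP; intro; apply HK; intro; contradiction|]. intro; apply HK; auto.
Qed.
Lemma fresh_fs Y (x : Y) c : fresh Y c x -> fs Y x.
Proof. intro H. destruct (fresh_ex _ _ _ H) as [K [HK _]]. exists K; auto. Qed.
Lemma fs_fresh Y (x : Y) : fs Y x -> forall K', exists c, fresh Y c x /\ ~ In c K'.
Proof.
  intros [K HK] K'. destruct (notin_ex' (K ++ K')) as [c Hc].
  exists c; split. apply (fresh_of _ K); auto. intro; apply Hc, in_or_app; auto.
  intro; apply Hc, in_or_app; auto.
Qed.

Lemma swap_fix Y K (x : Y) a b : supports Y K x -> ~ In a K -> ~ In b K -> pact Y (swap a b) x = x.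
Proof.
  intros S Ha Hb. apply S. intros c Hc. simpl. unfold swapf.
  destruct (Nat.eqb_spec c a); [subst; contradiction|].
  destruct (Nat.eqb_spec c b); [subst; contradiction|]. reflexivity.
Qed.

Lemma fresh_swap Y (HY : lawful Y) (x : Y) a b : fresh Y a x -> fresh Y b x -> pact Y (swap a b) x = x.
Proof.
  intros Fa Fb. destruct (Nat.eq_dec a b) as [<-|Hab].
  { rewrite swap_refl. apply HY. }
  destruct (fresh_ex _ _ _ Fa) as [K1 [S1 N1]]. destruct (fresh_ex _ _ _ Fb) as [K2 [S2 N2]].
  destruct (notin_ex' (a :: b :: K1 ++ K2)) as [c Hc].
  assert (c <> a) by (intro; apply Hc; simpl; auto).
  assert (c <> b) by (intro; apply Hc; simpl; auto).
  assert (~ In c K1) by (intro; apply Hc; simpl; right; right; apply in_or_app; auto).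
  assert (~ In c K2) by (intro; apply Hc; simpl; right; right; apply in_or_app; auto).
  assert (E : swap a b = pcomp (swap a c) (pcomp (swap b c) (swap a c))).
  { apply perm_ext; intro y; simpl. swt. }
  rewrite E. destruct HY as [h1 h2]. rewrite !h2.
  rewrite (swap_fix Y K1 x a c); auto.
  rewrite (swap_fix Y K2 x b c); auto.
  rewrite (swap_fix Y K1 x a c); auto.
Qed.

Lemma supp_supports Y (HY : lawful Y) (x : Y) L : fs Y x -> (forall a, supp Y x a -> In a L) -> supports Y L x.
Proof.
  intros Hfs HL.
  assert (Sw : forall a b, ~ In a L -> ~ In b L -> pact Y (swap a b) x = x).
  { intros a b Ha Hb. apply fresh_swap; auto; intro H; auto. }
  assert (Ind : forall N p, (forall c, N <= c -> pf p c = c) -> (forall c, In c L -> pf p c = c) -> pact Y p x = x).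
  { induction N as [|N IH]; intros p Hn HLp.
    - assert (p = pid) as -> by (apply perm_ext; intro; apply Hn; lia). apply HY.
    - destruct (Nat.eq_dec (pf p N) N) as [E|NE].
      + apply IH; auto. intros c Hc. destruct (Nat.eq_dec c N) as [->|]; auto. apply Hn; lia.
      + remember (pf p N) as b eqn:Eb.
        assert (Hb : forall c, pf p c = c -> c <> b).
        { intros c Hc ->. apply NE. apply (pf_inj p). congruence. }
        assert (Eq : p = pcomp (swap N b) (pcomp (swap N b) p)).
        { apply perm_ext; intro y; simpl. rewrite swapf_inv. reflexivity. }
        assert (Hq : pact Y (pcomp (swap N b) p) x = x).
        { apply IH.
          - intros c Hc. simpl. destruct (Nat.eq_dec c N) as [->|Hc'].
            + rewrite <- Eb. unfold swapf. rewrite (proj2 (Nat.eqb_neq b N) NE), Nat.eqb_refl. reflexivity.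
            + rewrite Hn by lia. assert (c <> b) by (apply Hb, Hn; lia). swt.
          - intros c Hc. simpl. rewrite HLp by auto.
            assert (c <> b) by (apply Hb, HLp; auto).
            assert (c <> N) by (intros ->; apply NE; rewrite Eb; apply HLp; auto). swt. }
        rewrite Eq, (proj2 HY), Hq. apply Sw.
        * intro H; apply NE; rewrite Eb; apply HLp; auto.
        * intro H. apply (Hb b); auto. }
  intros p Hp. destruct (pf_fin p) as [N HN]. apply (Ind N); auto.
Qed.

Lemma supports_act Y (HY : lawful Y) K (x : Y) p : supports Y K x -> supports Y (map (pf p) K) (pact Y p x).
Proof.
  intros S r Hr. destruct HY as [h1 h2].
  assert (E : pcomp r p = pcomp p (pcomp (pinverse p) (pcomp r p))).
  { apply perm_ext; intro; simpl. rewrite pf_pinv. reflexivity. }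
  rewrite <- h2, E, h2, (S (pcomp (pinverse p) (pcomp r p))). reflexivity.
  intros a Ha. simpl. rewrite Hr. apply pinv_pf. apply in_map; auto.
Qed.

Lemma fs_act Y (HY : lawful Y) (x : Y) p : fs Y x -> fs Y (pact Y p x).
Proof. intros [K HK]. exists (map (pf p) K). apply supports_act; auto. Qed.

Lemma supp_act Y (HY : lawful Y) (x : Y) p a : supp Y (pact Y p x) (pf p a) <-> supp Y x a.
Proof.
  split; intros H K HK.
  - assert (H2 := supports_act Y HY K x p HK). specialize (H _ H2).
    apply in_map_iff in H. destruct H as [b [E Hb]]. apply pf_inj in E. subst; auto.
  - assert (H2 := supports_act Y HY K _ (pinverse p) HK). rewrite act_inv_l in H2 by auto.
    specialize (H _ H2). apply in_map_iff in H. destruct H as [b [E Hb]]. simpl in E.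
    subst. rewrite pf_pinv. auto.
Qed.

Lemma fresh_act Y (HY : lawful Y) (x : Y) p a : fresh Y (pf p a) (pact Y p x) <-> fresh Y a x.
Proof. unfold fresh. rewrite supp_act; auto. tauto. Qed.

Lemma pinv_fix (p : perm) a : pf p a = a -> pinv p a = a.
Proof. intro H. rewrite <- H at 1. apply pinv_pf. Qed.

Lemma Tfix Y K (A : pT Y) p : supports (pT Y) K A -> (forall a, In a K -> pf p a = a) ->
  forall y, A (pact Y p y) <-> A y.
Proof.
  intros S Hp y.
  assert (E : pact (pT Y) (pinverse p) A = A).
  { apply S. intros a Ha. simpl. apply pinv_fix, Hp; auto. }
  pose proof (f_equal (fun B : pT Y => B y) E) as E'. simpl in E'. rewrite pinverse_inv in E'. rewrite E'. tauto.
Qed.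

Lemma T2' Y (HY : lawful Y) L (A : pT Y) : (forall x, A x -> supports Y L x) -> supports (pT Y) L A.
Proof.
  intros H p Hp. simpl. apply functional_extensionality; intro y. apply propositional_extensionality.
  split; intro Hy.
  - assert (E : pact Y p (pact Y (pinverse p) y) = pact Y (pinverse p) y) by (apply H; auto).
    rewrite act_inv_r in E by auto. rewrite E; auto.
  - rewrite (H y Hy (pinverse p)); auto. intros a Ha; simpl; apply pinv_fix, Hp; auto.
Qed.

Lemma T1 Y (A : pT Y) x : ufs Y A -> A x -> fs Y x.
Proof.
  intros [L HL] Ax. apply NNPP; intro N.
  destruct (notin_ex' L) as [c Hc]. apply Hc. apply (HL x Ax). intros K HK. exfalso; apply N; exists K; auto.
Qed.

Lemma ufs_supports Y (HY : lawful Y) (A : pT Y) : ufs Y A -> exists L, forall x, A x -> supports Y L x.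
Proof.
  intros U. pose proof U as [L HL]. exists L. intros x Ax. apply supp_supports; auto.
  apply (T1 Y A); auto. intros a Ha; apply (HL x Ax a Ha).
Qed.

Lemma ufs_fs Y (HY : lawful Y) (A : pT Y) : ufs Y A -> fs (pT Y) A.
Proof. intro U. destruct (ufs_supports Y HY A U) as [L HL]. exists L. apply T2'; auto. Qed.

Lemma swapf_l a b : swapf a b a = b.
Proof. unfold swapf. rewrite Nat.eqb_refl. reflexivity. Qed.
Lemma swapf_r a b : swapf a b b = a.
Proof. unfold swapf. destruct (Nat.eqb_spec b a); subst; auto. rewrite Nat.eqb_refl; auto. Qed.

Lemma supp_elem Y (HY : lawful Y) (A : pT Y) x a : ufs Y A -> A x -> supp Y x a -> supp (pT Y) A a.
Proof.
  intros U Ax Hs K HK. apply NNPP; intro Na.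
  destruct U as [L HL].
  destruct (notin_ex' (a :: K ++ L)) as [b Hb].
  assert (b <> a) by (intro; apply Hb; simpl; auto).
  assert (~ In b K) by (intro; apply Hb; simpl; right; apply in_or_app; auto).
  assert (A (pact Y (swap a b) x)).
  { apply (Tfix Y K A (swap a b) HK); auto. intros c Hc; simpl. swt. }
  apply Hb. simpl; right; apply in_or_app; right.
  apply (HL _ H1).
  assert (H2 : supp Y (pact Y (swap a b) x) (pf (swap a b) a)) by (apply supp_act; auto).
  simpl in H2; rewrite swapf_l in H2. exact H2.
Qed.

Lemma fresh_elem Y (HY : lawful Y) (A : pT Y) x a : ufs Y A -> fresh (pT Y) a A -> A x -> fresh Y a x.
Proof. intros U F Ax S. apply F. eapply supp_elem; eauto. Qed.

Lemma ufs_act Y (HY : lawful Y) (A : pT Y) p : ufs Y A -> ufs Y (pact (pT Y) p A).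
Proof.
  intros [L HL]. exists (map (pf p) L). intros y Hy b Hb. simpl in Hy.
  assert (Hb' : supp Y (pact Y (pinverse p) y) (pf (pinverse p) b)) by (apply supp_act; auto).
  specialize (HL _ Hy _ Hb'). apply in_map_iff. exists (pinv p b); split; auto. apply pf_pinv.
Qed.

Lemma notin_app_l (c : nat) K K' : ~ In c (K ++ K') -> ~ In c K.
Proof. intros H H'; apply H, in_or_app; auto. Qed.
Lemma notin_app_r (c : nat) K K' : ~ In c (K ++ K') -> ~ In c K'.
Proof. intros H H'; apply H, in_or_app; auto. Qed.

Lemma abs_refl Y (x : Y) a : fs Y x -> abs Y a x (a, x).
Proof.
  intros [K HK]. destruct (notin_ex' (a :: K)) as [c Hc].
  exists c; simpl. assert (c <> a) by (intro; apply Hc; simpl; auto).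
  assert (fresh Y c x) by (apply (fresh_of _ K); auto; intro; apply Hc; simpl; auto).
  tauto.
Qed.

Lemma swap_conj_perm p a c : pcomp (swap (pf p a) (pf p c)) p = pcomp p (swap a c).
Proof. apply perm_ext; intro; simpl; apply swap_conj_p. Qed.

Lemma abs_any Y (HY : lawful Y) (x z : Y) a b c c' :
  pact Y (swap a c) x = pact Y (swap b c) z -> c <> a -> c <> b -> fresh Y c x -> fresh Y c z ->
  c' <> a -> c' <> b -> fresh Y c' x -> fresh Y c' z ->
  pact Y (swap a c') x = pact Y (swap b c') z.
Proof.
  intros E ca cb fx fz c'a c'b fx' fz'. destruct (Nat.eq_dec c c') as [<-|ne]; auto.
  assert (H : pact Y (swap c c') (pact Y (swap a c) x) = pact Y (swap c c') (pact Y (swap b c) z)) by (rewrite E; auto).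
  destruct HY as [h1 h2]. rewrite <- !h2 in H.
  assert (P1 : forall d, d <> c -> d <> c' -> pcomp (swap c c') (swap d c) = pcomp (swap d c') (swap c c')).
  { intros d H1 H2. apply perm_ext; intro; simpl; apply swap_conj; auto. }
  rewrite !P1 in H by auto. rewrite !h2 in H.
  rewrite (fresh_swap Y (conj h1 h2) x c c'), (fresh_swap Y (conj h1 h2) z c c') in H; auto.
Qed.

Lemma abs_sym Y (x z : Y) a b : abs Y a x (b, z) -> abs Y b z (a, x).
Proof. intros [c [H1 [H2 [H3 [H4 H5]]]]]; exists c; simpl in *; auto 10. Qed.

Lemma abs_trans Y (HY : lawful Y) (x y z : Y) a b d : abs Y a x (b, y) -> abs Y b y (d, z) -> abs Y a x (d, z).
Proof.
  intros [c1 [H1 [H2 [H3 [H4 H5]]]]] [c2 [G1 [G2 [G3 [G4 G5]]]]]; simpl in *.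
  destruct (fresh_fs _ _ _ H3) as [Kx Hx]. destruct (fresh_fs _ _ _ H4) as [Ky Hy].
  destruct (fresh_fs _ _ _ G4) as [Kz Hz].
  destruct (notin_ex' (a :: b :: d :: Kx ++ Ky ++ Kz)) as [e He].
  assert (e <> a) by (intro; apply He; simpl; auto).
  assert (e <> b) by (intro; apply He; simpl; auto).
  assert (e <> d) by (intro; apply He; simpl; auto).
  assert (Fx : fresh Y e x) by (apply (fresh_of _ Kx); auto; intro; apply He; simpl; right; right; right; apply in_or_app; auto).
  assert (Fy : fresh Y e y) by (apply (fresh_of _ Ky); auto; intro; apply He; simpl; right; right; right; apply in_or_app; right; apply in_or_app; auto).
  assert (Fz : fresh Y e z) by (apply (fresh_of _ Kz); auto; intro; apply He; simpl; right; right; right; apply in_or_app; right; apply in_or_app; auto).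
  exists e; simpl. repeat split; auto.
  rewrite (abs_any Y HY x y a b c1 e); auto.
  apply (abs_any Y HY y z b d c2 e); auto.
Qed.

Lemma abs_eq Y (HY : lawful Y) (x z : Y) a b : abs Y a x (b, z) -> abs Y a x = abs Y b z.
Proof.
  intro R. apply functional_extensionality; intros [d w]. apply propositional_extensionality; split; intro H.
  - apply (abs_trans Y HY _ x _ _ a); auto. apply abs_sym; auto.
  - apply (abs_trans Y HY _ z _ _ b); auto.
Qed.

Lemma abs_eq_inv Y (x z : Y) a b : abs Y a x = abs Y b z -> fs Y z -> abs Y a x (b, z).
Proof. intros E F. rewrite E. apply abs_refl; auto. Qed.

Lemma abs_inj Y (HY : lawful Y) (x y : Y) a : abs Y a x = abs Y a y -> fs Y y -> x = y.
Proof.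
  intros E F. destruct (abs_eq_inv Y x y a a E F) as [c [H1 [H2 [H3 [H4 H5]]]]]; simpl in *.
  apply (act_inj Y HY _ _ _ H5).
Qed.

Lemma abs_rename Y (HY : lawful Y) (x : Y) a c : fresh Y c x -> abs Y a x = abs Y c (pact Y (swap a c) x).
Proof.
  intro F. destruct (Nat.eq_dec c a) as [->|ne].
  { rewrite swap_refl, (proj1 HY). reflexivity. }
  apply abs_eq; auto. destruct (fresh_ex _ _ _ F) as [Kx [Hx Nc]].
  destruct (notin_ex' (a :: c :: Kx ++ map (pf (swap a c)) Kx)) as [d Hd].
  assert (d <> a) by (intro; apply Hd; simpl; auto).
  assert (d <> c) by (intro; apply Hd; simpl; auto).
  assert (~ In d Kx) by (intro; apply Hd; simpl; right; right; apply in_or_app; auto).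
  assert (~ In d (map (pf (swap a c)) Kx)) by (intro; apply Hd; simpl; right; right; apply in_or_app; auto).
  exists d; simpl. repeat split; auto.
  - apply (fresh_of _ Kx); auto.
  - apply (fresh_of _ (map (pf (swap a c)) Kx)); auto. apply supports_act; auto.
  - destruct HY as [h1 h2]. rewrite <- h2.
    assert (P : pcomp (swap c d) (swap a c) = pcomp (swap a d) (swap c d)).
    { apply perm_ext; intro; simpl; apply swap_conj; auto. }
    rewrite P, h2, (swap_fix Y Kx x c d); auto.
Qed.

Lemma absrel_act Y (HY : lawful Y) (x z : Y) a b p :
  abs Y a x (b, z) -> abs Y (pf p a) (pact Y p x) (pf p b, pact Y p z).
Proof.
  intros [c [H1 [H2 [H3 [H4 H5]]]]]; simpl in *.
  exists (pf p c); simpl. repeat split.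
  - intro E; apply pf_inj in E; auto.
  - intro E; apply pf_inj in E; auto.
  - apply fresh_act; auto.
  - apply fresh_act; auto.
  - destruct HY as [h1 h2]. rewrite <- !h2, !swap_conj_perm, !h2, H5. reflexivity.
Qed.

Lemma abs_act Y (HY : lawful Y) (x : Y) a p :
  pact (pAbs Y) p (abs Y a x) = abs Y (pf p a) (pact Y p x).
Proof.
  apply functional_extensionality; intros [b z]. simpl. apply propositional_extensionality; split; intro H.
  - apply (absrel_act Y HY _ _ _ _ p) in H. rewrite pf_pinv, act_inv_r in H; auto.
  - apply (absrel_act Y HY _ _ _ _ (pinverse p)) in H. simpl in H. rewrite pinv_pf, act_inv_l in H; auto.
Qed.

Lemma abs_supports_inv Y (HY : lawful Y) (x : Y) a K :
  supports (pAbs Y) K (abs Y a x) -> fs Y x -> supports Y (a :: K) x.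
Proof.
  intros S F p Hp. assert (E := S p (fun b Hb => Hp b (or_intror Hb))).
  rewrite abs_act in E by auto. rewrite (Hp a (or_introl eq_refl)) in E.
  apply abs_inj in E; auto.
Qed.

Lemma abs_supports Y (HY : lawful Y) (x : Y) a K :
  supports Y K x -> supports (pAbs Y) (remove Nat.eq_dec a K) (abs Y a x).
Proof.
  intros S p Hp. rewrite abs_act by auto.
  destruct (Nat.eq_dec (pf p a) a) as [Ea|Na].
  - rewrite Ea, S. reflexivity. intros k Hk. destruct (Nat.eq_dec k a) as [->|]; auto.
    apply Hp, in_in_remove; auto.
  - apply abs_eq; auto.
    destruct (notin_ex' (a :: pf p a :: K ++ map (pf p) K)) as [c Hc].
    assert (c <> a) by (intro; apply Hc; simpl; auto).
    assert (c <> pf p a) by (intro; apply Hc; simpl; auto).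
    assert (~ In c K) by (intro; apply Hc; simpl; right; right; apply in_or_app; auto).
    assert (~ In c (map (pf p) K)) by (intro; apply Hc; simpl; right; right; apply in_or_app; auto).
    exists c; simpl. repeat split; auto.
    + apply (fresh_of _ (map (pf p) K)); auto. apply supports_act; auto.
    + apply (fresh_of _ K); auto.
    + apply (act_inj Y HY (swap a c)). rewrite act_swap2 by auto.
      destruct HY as [h1 h2]. rewrite <- !h2. apply S.
      intros k Hk. simpl. destruct (Nat.eq_dec k a) as [->|nk].
      * rewrite swapf_l, swapf_r. reflexivity.
      * assert (Pk : pf p k = k) by (apply Hp, in_in_remove; auto).
        rewrite Pk. assert (k <> pf p a) by (intro E; rewrite E in Pk; apply pf_inj in Pk; auto).
        assert (k <> c) by (intros ->; auto). swt.
Qed.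

Definition Phi Y Y' (j : pAbs Y -> Y') (Z : pT Y') (c : nat) : pT Y := fun s => Z (j (abs Y c s)).

Definition equiv_j Y Y' (j : pAbs Y -> Y') := forall p P, j (pact (pAbs Y) p P) = pact Y' p (j P).

Lemma Phi_supports Y Y' (HY : lawful Y) (HY' : lawful Y') j (Hj : equiv_j Y Y' j) (Z : pT Y') K c :
  supports (pT Y') K Z -> supports (pT Y) (c :: K) (Phi Y Y' j Z c).
Proof.
  intros S p Hp. apply functional_extensionality; intro s. simpl. unfold Phi.
  assert (Hc : pinv p c = c) by (apply pinv_fix, Hp; simpl; auto).
  assert (E : abs Y c (pact Y (pinverse p) s) = pact (pAbs Y) (pinverse p) (abs Y c s)).
  { rewrite abs_act by auto. simpl. rewrite Hc. reflexivity. }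
  rewrite E, Hj. apply propositional_extensionality. apply (Tfix Y' K Z (pinverse p) S).
  intros a Ha; simpl; apply pinv_fix, Hp; simpl; auto.
Qed.

Lemma abs_Phi Y Y' (HY : lawful Y) (HY' : lawful Y') j (Hj : equiv_j Y Y' j) (Z : pT Y') K1 K2 c d :
  supports (pT Y') K1 Z -> supports (pT Y') K2 Z -> ~ In c K1 -> ~ In d K2 ->
  abs (pT Y) c (Phi Y Y' j Z c) = abs (pT Y) d (Phi Y Y' j Z d).
Proof.
  intros S1 S2 N1 N2. destruct (Nat.eq_dec c d) as [<-|ne]; auto.
  rewrite (abs_rename (pT Y) (lawful_T Y HY) _ c d).
  2:{ apply (fresh_of _ (c :: K2)). apply Phi_supports; auto. intros [E|E]; auto. }
  f_equal. apply functional_extensionality; intro s. simpl. rewrite pinverse_swap. unfold Phi.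
  assert (E : abs Y c (pact Y (swap c d) s) = pact (pAbs Y) (swap c d) (abs Y d s)).
  { rewrite abs_act by auto. simpl. rewrite swapf_r. reflexivity. }
  rewrite E, Hj.
  assert (EZ : pact (pT Y') (swap c d) Z = Z).
  { apply fresh_swap. apply lawful_T; auto. apply (fresh_of _ K1); auto. apply (fresh_of _ K2); auto. }
  pose proof (f_equal (fun B : pT Y' => B (pact Y' (swap c d) (j (abs Y d s)))) EZ) as EZ'.
  simpl in EZ'. rewrite pinverse_swap, act_swap2 in EZ' by auto. auto.
Qed.

Lemma mu_act (X : pset) (HX : lawful X) (W : pT (pT X)) p :
  pact (pT X) p (mu X W) = mu X (pact (pT (pT X)) p W).
Proof.
  apply functional_extensionality; intro s. apply propositional_extensionality. unfold mu. split.
  - intros [A [HA As]]. exists (pact (pT X) p A). split.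
    + change (W (pact (pT X) (pinverse p) (pact (pT X) p A))). rewrite act_inv_l; auto. apply lawful_T; auto.
    + simpl. auto.
  - intros [A [HA As]]. exists (pact (pT X) (pinverse p) A). split; auto.
    simpl. rewrite pinverse_inv, act_inv_r; auto.
Qed.

Lemma mu_supports (X : pset) (HX : lawful X) (W : pT (pT X)) K :
  supports (pT (pT X)) K W -> supports (pT X) K (mu X W).
Proof. intros S p Hp. rewrite mu_act, S; auto. Qed.

Lemma absmap_mu (X : pset) (HX : lawful X) (W : pT (pT X)) a : fs (pT (pT X)) W ->
  absmap (pT (pT X)) (pT X) (mu X) (abs (pT (pT X)) a W) = abs (pT X) a (mu X W).
Proof.
  intro F. assert (HT := lawful_T X HX). assert (HTT := lawful_T _ HT).
  apply functional_extensionality; intro z. apply propositional_extensionality. unfold absmap. split.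
  - intros [b [W' [E H]]].
    assert (R : abs (pT (pT X)) b W' (a, W)) by (apply abs_eq_inv; auto).
    assert (E2 : abs (pT X) b (mu X W') = abs (pT X) a (mu X W)).
    { apply abs_eq; auto. destruct R as [c [H1 [H2 [H3 [H4 H5]]]]]; cbn [fst snd] in *.
      exists c; cbn [fst snd]. repeat split; auto.
      - destruct (fresh_ex _ _ _ H3) as [K [HK NK]]. apply (fresh_of _ K); auto. apply mu_supports; auto.
      - destruct (fresh_ex _ _ _ H4) as [K [HK NK]]. apply (fresh_of _ K); auto. apply mu_supports; auto.
      - rewrite !mu_act, H5 by auto. reflexivity. }
    rewrite <- E2; auto.
  - intro H. exists a, W. split; auto.
Qed.

Lemma choose_fresh_spec Y (x : Y) : fs Y x -> fresh Y (choose_fresh Y x) x.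
Proof.
  intro F. unfold choose_fresh. apply epsilon_spec.
  destruct (fs_fresh Y x F []) as [c [Hc _]]. exists c; auto.
Qed.

Lemma pbool_eq (P Q : Prop) : (P <-> Q) -> pbool P = pbool Q.
Proof. intro H. rewrite (propositional_extensionality P Q H). reflexivity. Qed.
Lemma pbool_true (P : Prop) : pbool P = true <-> P.
Proof. unfold pbool. destruct (excluded_middle_informative P); split; auto; discriminate. Qed.

Definition jj Y : pAbs Y -> pF Y := fun P => inr (inr P).
Lemma jj_equiv Y : equiv_j Y (pF Y) (jj Y).
Proof. intros p P; reflexivity. Qed.
Lemma id_equiv Y : equiv_j Y (pAbs Y) (fun P => P).
Proof. intros p P; reflexivity. Qed.

Lemma eps_unfold (X : pset) (S : pT (pF X)) : eps X S =
  ((pbool (S (inl tt)), fun b s => S (inr (inl (b, s)))),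
   abs (pT X) (choose_fresh (pT (pF X)) S) (Phi X (pF X) (jj X) S (choose_fresh (pT (pF X)) S))).
Proof. reflexivity. Qed.

Lemma supports_jj Y K (P : pAbs Y) : supports (pF Y) K (inr (inr P)) <-> supports (pAbs Y) K P.
Proof.
  split; intros S p Hp.
  - specialize (S p Hp). change (@inr unit _ (@inr (nat * Y) _ (pact (pAbs Y) p P)) = inr (inr P)) in S.
    injection S; auto.
  - change (@inr unit _ (@inr (nat * Y) _ (pact (pAbs Y) p P)) = inr (inr P)). rewrite (S p Hp). reflexivity.
Qed.

Lemma supports_inl Y K : supports (pF Y) K (inl tt).
Proof. intros p _; reflexivity. Qed.

Lemma supports_inrinl Y K b (x : Y) : supports (pF Y) K (inr (inl (b, x))) -> In b K /\ supports Y K x.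
Proof.
  intro S. split.
  - apply NNPP; intro Nb. destruct (notin_ex' (b :: K)) as [c Hc].
    assert (E := S (swap b c)). simpl in E. rewrite swapf_l in E.
    assert (c <> b) by (intro; apply Hc; simpl; auto).
    assert (c = b); [|auto]. refine (f_equal (fun u => match u with inr (inl (a, _)) => a | _ => 0 end) (E _)).
    intros k Hk. simpl. assert (k <> b) by (intros ->; auto). assert (k <> c) by (intros ->; apply Hc; simpl; auto). swt.
  - intros p Hp. specialize (S p Hp).
    change (@inr unit (nat * Y + pAbs Y) (inl (pf p b, pact Y p x)) = inr (inl (b, x))) in S. congruence.
Qed.

Lemma supports_inrinl' Y K b (x : Y) : In b K -> supports Y K x -> supports (pF Y) K (inr (inl (b, x))).
Proof. intros Hb S p Hp. simpl. rewrite (S p Hp), (Hp b Hb). reflexivity. Qed.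

Lemma elem_supports Y (HY : lawful Y) (A : pT Y) K s : ufs Y A -> supports (pT Y) K A -> A s -> supports Y K s.
Proof.
  intros U S As. apply supp_supports; auto. apply (T1 Y A); auto.
  intros a Ha. apply (supp_elem Y HY A s a U As Ha). auto.
Qed.

Lemma abs_ufs (X : pset) (HX : lawful X) (P : pAbs (pT X)) a (A : pT X) :
  inAbs (pT X) (inT X (allX X)) P -> P = abs (pT X) a A -> ufs X A.
Proof.
  intros [a0 [A0 [[U0 _] E0]]] E. subst P.
  assert (HT := lawful_T X HX).
  assert (R : abs (pT X) a A (a0, A0)) by (apply abs_eq_inv; auto; apply ufs_fs; auto).
  destruct R as [c [H1 [H2 [H3 [H4 H5]]]]]; cbn [fst snd] in *.
  assert (A = pact (pT X) (swap a c) (pact (pT X) (swap a0 c) A0)) as ->.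
  { rewrite <- H5, act_swap2; auto. }
  apply ufs_act; auto. apply ufs_act; auto.
Qed.

Lemma pair_eq {A B : Type} (a c : A) (b d : B) : a = c -> b = d -> (a, b) = (c, d).
Proof. intros -> ->; reflexivity. Qed.

Lemma claim1 (X : nominal) (S : pT (pF (pT X))) :
     inT (pF (pT X)) (inF (pT X) (inT X (allX X))) S ->
     eps X (mu (pF X) (Tmap (pF (pT X)) (pT (pF X)) (lam X) S))
     = Gmap (pT (pT X)) (pT X) (mu X) (eps (pT X) S).
Proof.
  intros [US HS].
  assert (HX := lawful_nom X). assert (HT := lawful_T _ HX). assert (HF := lawful_F _ HX).
  assert (HFT := lawful_F _ HT).
  destruct (ufs_supports _ HFT S US) as [L HL].
  set (S' := mu (pF X) (Tmap (pF (pT X)) (pT (pF X)) (lam X) S)).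
  assert (HS' : forall z, S' z -> supports (pF X) L z).
  { intros z [A [[u [Su ->]] Hz]]. specialize (HL u Su). specialize (HS u Su).
    destruct u as [[]|[[b B]|P]]; simpl in Hz.
    - subst z. apply supports_inl.
    - destruct Hz as [x [Bx ->]]. apply supports_inrinl in HL. destruct HL as [Hb HB].
      apply supports_inrinl'; auto. apply (elem_supports X HX B); auto. apply HS.
    - destruct Hz as [a [A [s [EP [As ->]]]]]. apply supports_jj in HL. apply supports_jj.
      assert (UA : ufs X A) by (apply (abs_ufs X HX P a); auto).
      subst P. apply abs_supports_inv in HL; auto; [|apply ufs_fs; auto].
      eapply supports_mono; [|apply abs_supports; auto; apply (elem_supports X HX A); eauto].
      intros k Hk. apply in_remove in Hk. destruct Hk as [[E|Hk] Nk]; auto. congruence. }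
  assert (SS' : supports (pT (pF X)) L S') by (apply T2'; auto).
  assert (SS : supports (pT (pF (pT X))) L S) by (apply T2'; auto).
  rewrite (eps_unfold X S'), (eps_unfold (pT X) S). unfold Gmap. cbn [fst snd].
  destruct (fresh_ex _ _ _ (choose_fresh_spec _ S' (ex_intro _ L SS'))) as [K1 [SK1 N1]].
  destruct (fresh_ex _ _ _ (choose_fresh_spec _ S (ex_intro _ L SS))) as [K2 [SK2 N2]].
  set (a' := choose_fresh (pT (pF X)) S') in *. set (a := choose_fresh (pT (pF (pT X))) S) in *.
  destruct (notin_ex' L) as [d Nd].
  apply pair_eq; [apply pair_eq|].
  - apply pbool_eq. unfold S', mu, Tmap. split.
    + intros [A [[u [Su ->]] Hz]]. destruct u as [[]|[[b B]|P]]; simpl in Hz; auto.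
      * destruct Hz as [x [_ E]]; discriminate.
      * destruct Hz as [? [? [? [_ [_ E]]]]]; discriminate.
    + intro H. exists (lam X (inl tt)). split; [exists (inl tt); auto|]. reflexivity.
  - apply functional_extensionality; intro b. apply functional_extensionality; intro s.
    apply propositional_extensionality. unfold S', mu, Tmap. split.
    + intros [A [[u [Su ->]] Hz]]. destruct u as [[]|[[b' B]|P]]; simpl in Hz.
      * discriminate.
      * destruct Hz as [x [Bx E]]. injection E as -> ->. exists B; auto.
      * destruct Hz as [? [? [? [_ [_ E]]]]]; discriminate.
    + intros [B [SB Bs]]. exists (lam X (inr (inl (b, B)))). split; [exists (inr (inl (b, B))); auto|].
      simpl. exists s; auto.
  - transitivity (abs (pT X) d (Phi X (pF X) (jj X) S' d)).
    { apply (abs_Phi X (pF X) HX HF _ (jj_equiv X) S' K1 L); auto. }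
    rewrite (abs_Phi (pT X) (pF (pT X)) HT HFT _ (jj_equiv (pT X)) S K2 L a d); auto.
    rewrite absmap_mu; auto.
    2:{ exists (d :: L). apply Phi_supports; auto. apply jj_equiv. }
    f_equal. apply functional_extensionality; intro s. apply propositional_extensionality.
    unfold Phi, S', mu, Tmap, jj. split.
    + intros [A' [[u [Su ->]] Hz]]. destruct u as [[]|[[b' B]|P]]; simpl in Hz.
      * discriminate.
      * destruct Hz as [x [Bx E]]. discriminate.
      * destruct Hz as [a'' [A [s' [EP [As E]]]]]. injection E as E.
        assert (UA : ufs X A) by (apply (abs_ufs X HX P a''); auto; apply (HS _ Su)).
        assert (SP := HL _ Su). apply supports_jj in SP. rewrite EP in SP.
        assert (FA : fs (pT X) A) by (apply ufs_fs; auto).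
        destruct (Nat.eq_dec d a'') as [<-|nd].
        -- apply abs_inj in E; auto; [|apply act_fin]. subst s'. exists A. rewrite <- EP. auto.
        -- assert (SA := abs_supports_inv _ HT _ _ _ SP FA).
           assert (Fd : fresh (pT X) d A) by (apply (fresh_of _ _ _ _ SA); intros [?|?]; auto).
           assert (Fs : fresh X d s') by (apply (fresh_of _ (a'' :: L)); [apply (elem_supports X HX A); auto|]; intros [?|?]; auto).
           rewrite (abs_rename X HX s' a'' d Fs) in E. apply abs_inj in E; auto; [|apply act_fin].
           exists (pact (pT X) (swap a'' d) A). split.
           ++ rewrite <- (abs_rename (pT X) HT A a'' d Fd), <- EP. auto.
           ++ simpl. rewrite pinverse_swap, E, act_swap2; auto.
    + intros [A0 [SA0 A0s]]. exists (lam X (inr (inr (abs (pT X) d A0)))).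
      split; [eexists; split; [exact SA0|reflexivity]|]. simpl. exists d, A0, s. auto.
Qed.

Lemma eps_snd_key (X : nominal) (A : pT (pF X)) L d :
  supports (pT (pF X)) L A -> ~ In d L ->
  snd (eps X A) = abs (pT X) d (Phi X (pF X) (jj X) A d).
Proof.
  intros SA Nd. assert (HX := lawful_nom X). assert (HF := lawful_F _ HX).
  rewrite eps_unfold. cbn [snd].
  destruct (fresh_ex _ _ _ (choose_fresh_spec _ A (ex_intro _ L SA))) as [K [SK N]].
  apply (abs_Phi X (pF X) HX HF _ (jj_equiv X) A K L); auto.
Qed.

Lemma eps_snd_supports (X : nominal) (A : pT (pF X)) L :
  supports (pT (pF X)) L A -> supports (pAbs (pT X)) L (snd (eps X A)).
Proof.
  intros SA. assert (HX := lawful_nom X). assert (HF := lawful_F _ HX). assert (HT := lawful_T _ HX).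
  destruct (notin_ex' L) as [d Nd].
  rewrite (eps_snd_key X A L d SA Nd).
  apply (supports_mono _ (remove Nat.eq_dec d (d :: L))).
  2:{ apply abs_supports; [exact HT|]. apply Phi_supports; auto. apply jj_equiv. }
  intros k Hk. apply in_remove in Hk. destruct Hk as [[E|Hk] Nk]; auto. congruence.
Qed.

Lemma claim2 (X : nominal) (S : pT (pT (pF X))) :
     inT (pT (pF X)) (inT (pF X) (inF X (allX X))) S ->
     eps X (mu (pF X) S)
     = Gmap (pT (pT X)) (pT X) (mu X)
         (rho (pT X) (Tmap (pT (pF X)) (pG (pT X)) (eps X) S)).
Proof.
  intros [US HS].
  assert (HX := lawful_nom X). assert (HT := lawful_T _ HX). assert (HF := lawful_F _ HX).
  assert (HTF := lawful_T _ HF). assert (HAT := lawful_Abs _ HT).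
  destruct (ufs_supports _ HTF S US) as [L HL].
  assert (SmuS : supports (pT (pF X)) L (mu (pF X) S)).
  { apply T2'; auto. intros u [A [SA Au]]. apply (elem_supports (pF X) HF A); auto. apply (HS A SA). }
  rewrite (eps_unfold X (mu (pF X) S)). unfold Gmap, rho. cbn [fst snd].
  set (p2S := fun P : pAbs (pT X) => exists g : pG (pT X),
          Tmap (pT (pF X)) (pG (pT X)) (eps X) S g /\ P = snd g).
  assert (Sp2S : supports (pT (pAbs (pT X))) L p2S).
  { apply T2'; auto. intros P [g [[A [SA ->]] ->]]. apply eps_snd_supports; auto. }
  destruct (fresh_ex _ _ _ (choose_fresh_spec _ _ (ex_intro _ L SmuS))) as [K1 [SK1 N1]].
  destruct (fresh_ex _ _ _ (choose_fresh_spec _ _ (ex_intro _ L Sp2S))) as [K2 [SK2 N2]].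
  set (c := choose_fresh (pT (pF X)) (mu (pF X) S)) in *.
  set (a := choose_fresh (pT (pAbs (pT X))) p2S) in *.
  destruct (notin_ex' L) as [d Nd].
  apply pair_eq; [apply pair_eq|].
  - apply pbool_eq. unfold mu, Tmap. split.
    + intros [A [SA Ai]]. exists (eps X A). split; [exists A; auto|].
      rewrite eps_unfold; cbn [fst]. apply pbool_true; auto.
    + intros [g [[A [SA ->]] H]]. rewrite eps_unfold in H; cbn [fst] in H.
      apply (proj1 (pbool_true _)) in H. exists A; auto.
  - apply functional_extensionality; intro b. apply functional_extensionality; intro s.
    apply propositional_extensionality. unfold mu, Tmap. split.
    + intros [A [SA H]]. exists (fun s => A (inr (inl (b, s)))). split; auto.
      exists (eps X A). split; [exists A; auto|]. reflexivity.
    + intros [Y0 [[g [[A [SA ->]] ->]] H]]. exists A; auto.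
  - transitivity (abs (pT X) d (Phi X (pF X) (jj X) (mu (pF X) S) d)).
    { apply (abs_Phi X (pF X) HX HF _ (jj_equiv X) _ K1 L); auto. }
    symmetry.
    transitivity (absmap (pT (pT X)) (pT X) (mu X) (abs (pT (pT X)) d (Phi (pT X) (pAbs (pT X)) (fun P => P) p2S d))).
    { f_equal. apply (abs_Phi (pT X) (pAbs (pT X)) HT HAT _ (id_equiv (pT X)) p2S K2 L a d); auto. }
    rewrite absmap_mu; auto. symmetry.
    2:{ exists (d :: L). apply Phi_supports; auto. apply id_equiv. }
    f_equal. apply functional_extensionality; intro s. apply propositional_extensionality.
    unfold Phi, p2S, mu, Tmap, jj. split.
    + intros [A [SA H]]. exists (Phi X (pF X) (jj X) A d). split; [|exact H].
      exists (eps X A). split; [exists A; auto|]. symmetry; apply eps_snd_key with (L := L); auto.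
    + intros [B [[g [[A [SA ->]] E]] Bs]].
      rewrite (eps_snd_key X A L d (HL A SA) Nd) in E.
      apply abs_inj in E; auto.
      * subst B. exists A; auto.
      * exists (d :: L). apply Phi_supports; auto; first [apply jj_equiv | apply HL; auto].
Qed.

Theorem lemma4p20 (X : nominal) :
  (forall S : pT (pF (pT X)),
     inT (pF (pT X)) (inF (pT X) (inT X (allX X))) S ->
     eps X (mu (pF X) (Tmap (pF (pT X)) (pT (pF X)) (lam X) S))
     = Gmap (pT (pT X)) (pT X) (mu X) (eps (pT X) S)) /\
  (forall S : pT (pT (pF X)),
     inT (pT (pF X)) (inT (pF X) (inF X (allX X))) S ->
     eps X (mu (pF X) S)
     = Gmap (pT (pT X)) (pT X) (mu X)
         (rho (pT X) (Tmap (pT (pF X)) (pG (pT X)) (eps X) S))).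
Proof. split; [apply claim1 | apply claim2]. Qed.
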